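(* Fix $k\ge 2$ and let $D$ be either $A$ or $S$. Assume that for every sorted $2k$-tuple $x_1\le\dots\le x_{2k}$ of reals, the partition of $\{1,\dots,2k\}$ into $\{1,\dots,k\}$ and $\{k+1,\dots,2k\}$ is a minimal $k$-tuple partition with respect to $D$. Then for every $n\ge 1$ and every sorted $kn$-tuple $x_1\le x_2\le\dots\le x_{kn}$ of reals, the partition of $\{1,\dots,kn\}$ into the consecutive blocks $$B_i=\{(i-1)k+1,\,(i-1)k+2,\,\dots,\,ik\},\qquad i=1,\dots,n,$$ is a minimal $k$-tuple partition with respect to $D$.
   Context: For real numbers $x_1,\dots,x_k$ (repetitions allowed) define $A(x_1,\dots,x_k)=\sum_{1\le i<j\le k}|x_j-x_i|$ and $S(x_1,\dots,x_k)=\sum_{1\le i<j\le k}(x_j-x_i)^2$. Both depend only on the multiset of entries. Given real numbers $x_1,\dots,x_{kn}$, a $k$-tuple partition is a partition of the index set $\{1,\dots,kn\}$ into $n$ blocks, each of size $k$. The cost of the partition is the sum over the blocks $\{i_1,\dots,i_k\}$ of $D(x_{i_1},\dots,x_{i_k})$. A $k$-tuple partition is minimal with respect to $D$ if its cost is less than or equal to the cost of every other $k$-tuple partition. *)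

(* Defs.v *)
(* Reals are modelled by an arbitrary realFieldType R
   (the statement is purely order/algebraic). *)
From HB Require Import structures.
From mathcomp Require Import all_boot all_order all_algebra.
Set Implicit Arguments. Unset Strict Implicit. Unset Printing Implicit Defensive.
Import Order.TTheory GRing.Theory Num.Theory.
Local Open Scope ring_scope.

Definition Asum (R : realFieldType) (s : seq R) : R :=
  \sum_(i < size s) \sum_(j < size s | (i < j)%N) `|s`_j - s`_i|.

Definition Ssum (R : realFieldType) (s : seq R) : R :=
  \sum_(i < size s) \sum_(j < size s | (i < j)%N) (s`_j - s`_i) ^+ 2.

Definition ktuple_partition (N k : nat) (P : {set {set 'I_N}}) : Prop :=
  partition P [set: 'I_N] /\ forall B, B \in P -> #|B| = k.

Definition pcost (R : realFieldType) (N : nat) (D : seq R -> R)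
    (x : 'I_N -> R) (P : {set {set 'I_N}}) : R :=
  \sum_(B in P) D [seq x i | i <- enum B].

Definition minimal_ktuple (R : realFieldType) (N k : nat) (D : seq R -> R)
    (x : 'I_N -> R) (P : {set {set 'I_N}}) : Prop :=
  ktuple_partition k P /\
  forall Q, ktuple_partition k Q -> pcost D x P <= pcost D x Q.

(* Consecutive blocks B_m = {m k, ..., m k + k - 1} (0-indexed), m < n. *)
Definition consec_blocks (k n : nat) : {set {set 'I_(k * n)}} :=
  [set [set i : 'I_(k * n) | (i %/ k)%N == val m] | m : 'I_n].

Definition sorted_fun (R : realFieldType) (N : nat) (x : 'I_N -> R) : Prop :=
  forall i j : 'I_N, (i <= j)%N -> x i <= x j.

(* Main.v *)
Require Import Defs.
From HB Require Import structures.
From mathcomp Require Import all_boot all_order all_algebra zify.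
Import Order.TTheory GRing.Theory Num.Theory.
Set Implicit Arguments. Unset Strict Implicit. Unset Printing Implicit Defensive.

Section PartA.
Local Open Scope ring_scope.
Lemma pairsum (R : realFieldType) (F : R -> R -> R) (s : seq R) :
  (forall a b, F a b = F b a) -> (forall a, F a a = 0) ->
  \sum_(a <- s) \sum_(b <- s) F a b =
  (\sum_(i < size s) \sum_(j < size s | (i < j)%N) F s`_i s`_j) +
  (\sum_(i < size s) \sum_(j < size s | (i < j)%N) F s`_i s`_j).
Proof.
move=> Fs F0.
have bn : forall G : R -> R, \sum_(b <- s) G b = \sum_(j < size s) G s`_j.
  by move=> G; rewrite (big_nth (0:R) (r:=s) xpredT) big_mkord.
rewrite bn; under eq_bigr => i _ do rewrite bn.
have -> : \sum_(i < size s) \sum_(j < size s) F s`_i s`_j =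
   \sum_(i < size s) \sum_(j < size s | (i < j)%N) F s`_i s`_j +
   \sum_(i < size s) \sum_(j < size s | ~~ (i < j)%N) F s`_i s`_j.
  by rewrite -big_split /=; apply: eq_bigr => i _; rewrite (bigID (fun j : 'I__ => (i < j)%N)).
congr (_ + _).
have -> : \sum_(i < size s) \sum_(j < size s | ~~ (i < j)%N) F s`_i s`_j =
          \sum_(i < size s) \sum_(j < size s | (j < i)%N) F s`_i s`_j.
  apply: eq_bigr => i _; rewrite big_mkcond [RHS]big_mkcond /=.
  apply: eq_bigr => j _.
  case: (ltngtP i j) => // h.
  by rewrite (val_inj h) F0.
under eq_bigr => i _ do rewrite big_mkcond.
under [RHS]eq_bigr => i _ do rewrite big_mkcond.
rewrite [RHS](exchange_big _ (index_enum _) (index_enum _) xpredT xpredT) /=.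
apply: eq_bigr => i _; apply: eq_bigr => j _; rewrite Fs; by [].
Qed.

Lemma Asum2 (R : realFieldType) (s : seq R) :
  Asum s *+ 2 = \sum_(a <- s) \sum_(b <- s) `|b - a|.
Proof.
rewrite /Asum mulr2n (@pairsum R (fun a b => `|b - a|) s) //.
  by move=> a b; rewrite distrC.
by move=> a; rewrite subrr normr0.
Qed.

Lemma Ssum2 (R : realFieldType) (s : seq R) :
  Ssum s *+ 2 = \sum_(a <- s) \sum_(b <- s) (b - a) ^+ 2.
Proof.
rewrite /Ssum mulr2n (@pairsum R (fun a b => (b - a) ^+ 2) s) //.
  by move=> a b; rewrite -sqrrN opprB.
by move=> a; rewrite subrr expr0n.
Qed.

Lemma dsum_perm (R : realFieldType) (F : R -> R -> R) (s t : seq R) :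
  perm_eq s t -> \sum_(a <- s) \sum_(b <- s) F a b = \sum_(a <- t) \sum_(b <- t) F a b.
Proof.
move=> hst; rewrite (perm_big _ hst); apply: eq_bigr => a _; exact: perm_big.
Qed.

Lemma mul2K (R : realFieldType) (x y : R) : x *+ 2 = y *+ 2 -> x = y.
Proof. move=> h; apply: (@mulIf _ 2%:R); first by rewrite pnatr_eq0. by rewrite !mulr_natr. Qed.

Lemma D_perm (R : realFieldType) (D : seq R -> R) (s t : seq R) :
  (D = @Asum R \/ D = @Ssum R) -> perm_eq s t -> D s = D t.
Proof.
case=> -> hst; apply: mul2K.
  by rewrite !Asum2; apply: dsum_perm.
by rewrite !Ssum2; apply: dsum_perm.
Qed.
End PartA.


Lemma divk_eq (k i m : nat) : (0 < k)%N ->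
  (i %/ k == m) = ((k * m <= i) && (i < k * m + k))%N.
Proof.
move=> hk; rewrite eqn_leq leq_divRL // -ltnS ltn_divLR //.
rewrite mulSn [(m * k)%N]mulnC; apply/idP/idP => /andP [h1 h2]; apply/andP; split; lia.
Qed.

Lemma enum_sorted N (S : {set 'I_N}) : sorted (relpre val ltn) (enum S).
Proof.
have -> : enum S = [seq x <- enum 'I_N | x \in S].
  by rewrite -deprecated_filter_index_enum enumT.
apply: sorted_filter; first by move=> a b c /= ; apply: ltn_trans.
by rewrite -sorted_map val_enum_ord iota_ltn_sorted.
Qed.

Definition kgood N k (P : {set {set 'I_N}}) :=
  [/\ (forall B, B \in P -> #|B| = k),
      (forall i, exists2 B, B \in P & i \in B) &
      (forall B1 B2 i, B1 \in P -> B2 \in P -> i \in B1 -> i \in B2 -> B1 = B2)].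

Lemma ktupleP N k (P : {set {set 'I_N}}) : (0 < k)%N ->
  ktuple_partition k P <-> kgood k P.
Proof.
move=> hk; split.
  case=> /and3P [/eqP hcov htriv h0] hc; split => //.
    move=> i; have : i \in cover P by rewrite hcov inE.
    by case/bigcupP => B hB hi; exists B.
  move=> B1 B2 i h1 h2 i1 i2; apply/eqP; apply/negPn/negP => hne.
  have := (trivIsetP htriv) _ _ h1 h2 hne.
  by move/disjointFr => /(_ i i1); rewrite i2.
case=> hc hcov hu; split => //; apply/and3P; split.
- apply/eqP/setP => i; rewrite inE; apply/bigcupP.
  by have [B hB hi] := hcov i; exists B.
- apply/trivIsetP => A B hA hB hne; rewrite -setI_eq0; apply/eqP/setP => i.
  rewrite inE in_set0; apply/negbTE/andP => [[hiA hiB]].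
  by move/eqP: hne; apply; exact: (hu _ _ i).
- apply/negP => h0; have := hc _ h0; rewrite cards0 => k0.
  by rewrite -k0 in hk.
Qed.

Definition ktb N k (P : {set {set 'I_N}}) :=
  partition P [set: 'I_N] && [forall B in P, #|B| == k].

Lemma ktbP N k (P : {set {set 'I_N}}) : reflect (ktuple_partition k P) (ktb k P).
Proof.
apply: (iffP andP) => [[h1 /forall_inP h2]|[h1 h2]]; split => //.
  by move=> B /h2 /eqP.
by apply/forall_inP => B /h2 ->.
Qed.

Lemma card_blk k n m : (0 < k)%N -> (m < n)%N ->
  #|[set i : 'I_(k * n) | i %/ k == m]| = k.
Proof.
move=> hk hm.
have hlt : forall t : 'I_k, (k * m + t < k * n)%N.
  move=> t; have := ltn_ord t; have : (k * m + k <= k * n)%N.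
    by rewrite -mulnSr leq_mul2l hm orbT.
  lia.
pose h := fun t : 'I_k => Ordinal (hlt t).
have -> : [set i : 'I_(k * n) | i %/ k == m] = h @: setT.
  apply/setP => i; rewrite inE divk_eq //; apply/idP/imsetP.
    move=> /andP [h1 h2].
    have ht : (i - k * m < k)%N by lia.
    exists (Ordinal ht) => //; apply: val_inj => /=; lia.
  case=> t _ ->; rewrite /=; have := ltn_ord t; lia.
rewrite card_imset ?cardsT ?card_ord //.
move=> t1 t2 /(congr1 val) /= h12; apply: val_inj => /=; lia.
Qed.

Lemma consec_good k n : (0 < k)%N -> kgood k (consec_blocks k n).
Proof.
move=> hk; split.
- move=> B /imsetP [m _ ->]; exact: (card_blk hk (ltn_ord m)).
- move=> i; have hi : (i %/ k < n)%N.
    by rewrite ltn_divLR //; have := ltn_ord i; lia.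
  exists [set j : 'I_(k * n) | j %/ k == Ordinal hi]; first by apply/imsetP; exists (Ordinal hi).
  by rewrite inE.
- move=> B1 B2 i /imsetP [m1 _ ->] /imsetP [m2 _ ->]; rewrite !inE => /eqP h1 /eqP h2.
  by rewrite -h1 -h2.
Qed.

Definition sig N (B : {set 'I_N}) : nat := \sum_(i in B) nat_of_ord i.

Lemma setDP_L N (A B : {set 'I_N}) a : a \in A :\: B -> a \in A.
Proof. by rewrite inE => /andP []. Qed.

Lemma sig_low N (L U X : {set 'I_N}) :
  (forall a b, a \in L -> b \in U -> a < b) -> X \subset L :|: U ->
  #|X| = #|L| -> X != L -> sig L < sig X.
Proof.
move=> hb hX hc hne.
have eX : sig X = \sum_(i in X :&: L) nat_of_ord i + \sum_(i in X :\: L) nat_of_ord i := big_setID _ _.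
have eL : sig L = \sum_(i in L :&: X) nat_of_ord i + \sum_(i in L :\: X) nat_of_ord i := big_setID _ _.
rewrite setIC in eL.
have cX := cardsID L X; have cL := cardsID X L; rewrite setIC in cL.
set m := #|L :\: X| in cL *.
have hm : #|X :\: L| = m by lia.
have hpos : 0 < #|X :\: L|.
  rewrite lt0n cards_eq0 setD_eq0; apply/negP => hsub.
  move/negP: hne; apply; rewrite eqEcard hsub hc leqnn //.
have [a0 ha0] : exists a0, a0 \in L :\: X by apply/card_gt0P; rewrite -/m -hm.
set t := \max_(a in L :\: X) nat_of_ord a.
have hle : \sum_(i in L :\: X) nat_of_ord i <= m * t.
  rewrite -sum_nat_const; apply: leq_sum => a ha; exact: leq_bigmax_cond.
have hge : m * t.+1 <= \sum_(i in X :\: L) nat_of_ord i.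
  rewrite -hm -sum_nat_const; apply: leq_sum => b hbXL.
  have hbU : b \in U.
    move: hbXL; rewrite inE => /andP [hbL hbX].
    by move/subsetP: hX => /(_ b hbX); rewrite inE (negbTE hbL).
  have hab0 := hb a0 b (setDP_L ha0) hbU.
  have : t <= b.-1.
    apply/bigmax_leqP => a ha.
    have := hb a b (setDP_L ha) hbU; lia.
  lia.
rewrite mulnS in hge.
rewrite eX eL; lia.
Qed.

Definition Dc (R : realFieldType) N (D : seq R -> R) (x : 'I_N -> R) (B : {set 'I_N}) :=
  D [seq x i | i <- enum B].

Lemma Dc_img (R : realFieldType) N M (D : seq R -> R) (hD : D = @Asum R \/ D = @Ssum R)
  (x : 'I_N -> R) (g : 'I_M -> 'I_N) (X : {set 'I_M}) :
  injective g -> Dc D (fun t => x (g t)) X = Dc D x (g @: X).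
Proof.
move=> ginj; rewrite /Dc; apply: D_perm => //.
rewrite (map_comp x g); apply: perm_map; apply: uniq_perm.
- by rewrite (map_inj_uniq ginj) enum_uniq.
- exact: enum_uniq.
move=> i; rewrite mem_enum; apply/mapP/imsetP => [[t ht ->]|[t ht ->]].
  by exists t; rewrite // -mem_enum.
by exists t; rewrite // mem_enum.
Qed.

Lemma pcost2 (R : realFieldType) N (D : seq R -> R) (x : 'I_N -> R) (A B : {set 'I_N}) :
  A != B -> pcost D x [set A; B] = (Dc D x A + Dc D x B)%R.
Proof.
move=> hne; rewrite /pcost big_setU1 ?big_set1 //.
by rewrite inE.
Qed.

Lemma consec2 k : (0 < k)%N ->
  consec_blocks k 2 = [set [set t : 'I_(k * 2) | (t %/ k == 0)%N];
                           [set t : 'I_(k * 2) | (t %/ k == 1)%N]].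
Proof.
move=> hk; apply/setP => X; apply/imsetP/set2P.
  by case=> m _ ->; case: m => [[|[|m]]] //= hm; [left|right].
by case=> ->; [exists ord0 | exists (@Ordinal 2 1 isT)].
Qed.

Lemma swap (R : realFieldType) k (hk : (0 < k)%N) (D : seq R -> R)
  (hD : D = @Asum R \/ D = @Ssum R)
  (h2k : forall y : 'I_(k * 2) -> R, sorted_fun y -> minimal_ktuple k D y (consec_blocks k 2))
  N (x : 'I_N -> R) (hx : sorted_fun x) (C E : {set 'I_N}) :
  #|C| = k -> #|E| = k -> [disjoint C & E] ->
  exists L U : {set 'I_N}, [/\ #|L| = k, #|U| = k, L :|: U = C :|: E,
   (forall a b, a \in L -> b \in U -> (a < b)%N) &
   (Dc D x L + Dc D x U <= Dc D x C + Dc D x E)%R].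
Proof.
move=> hC hE hdis.
set S := C :|: E.
have hS : #|S| = (k * 2)%N.
  by rewrite /S cardsU (disjoint_setI0 hdis) cards0 hC hE; lia.
pose g (t : 'I_(k * 2)) : 'I_N := enum_val (cast_ord (esym hS) t).
have gS : forall t, g t \in S by move=> t; apply: enum_valP.
have ginj : injective g by move=> t1 t2 /enum_val_inj /cast_ord_inj.
have gmono : forall t1 t2 : 'I_(k * 2), (t1 < t2)%N -> (g t1 < g t2)%N.
  move=> t1 t2 h12; rewrite /g !(enum_val_nth (g t1)) /=.
  apply: (sorted_ltn_nth (leT := relpre val ltn)) => //.
  - by move=> a b c /=; apply: ltn_trans.
  - exact: enum_sorted.
  - by rewrite inE -cardE hS.
  - by rewrite inE -cardE hS.
have gsurj : forall i, i \in S -> exists t, i = g t.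
  move=> i hi; exists (cast_ord hS (enum_rank_in hi i)).
  by rewrite /g cast_ordK enum_rankK_in.
pose lo := [set t : 'I_(k * 2) | (t %/ k == 0)%N].
pose hi := [set t : 'I_(k * 2) | (t %/ k == 1)%N].
have hlo_lt : forall t, t \in lo -> (t < k)%N.
  by move=> t; rewrite inE divk_eq // => /andP []; lia.
have hhi_ge : forall t, t \in hi -> (k <= t)%N.
  by move=> t; rewrite inE divk_eq // => /andP []; lia.
exists (g @: lo), (g @: hi); split.
- by rewrite card_imset // card_blk.
- by rewrite card_imset // card_blk.
- apply/setP => i; apply/idP/idP.
    by case/setUP => /imsetP [t _ ->]; apply: gS.
  move=> /gsurj [t ->]; apply/setUP.
  have ht : (t %/ k < 2)%N by rewrite ltn_divLR //; have := ltn_ord t; lia.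
  have : (t %/ k == 0)%N || (t %/ k == 1)%N by move: ht; case: (t %/ k) => [|[|n]] //.
  by case/orP => h; [left | right]; apply/imsetP; exists t; rewrite // inE.
- move=> a b /imsetP [t1 h1 ->] /imsetP [t2 h2 ->]; apply: gmono.
  by have := hlo_lt _ h1; have := hhi_ge _ h2; lia.
pose y t := x (g t).
have hy : sorted_fun y.
  move=> t1 t2; rewrite leq_eqVlt => /orP [/eqP h | h].
    by rewrite (val_inj h).
  by apply: hx; apply: ltnW; apply: gmono.
have [_ hmin] := h2k y hy.
pose C' := g @^-1: C; pose E' := g @^-1: E.
have hCim : C = g @: C'.
  apply/setP => i; apply/idP/imsetP => [hi'|[t ht ->]].
    have /gsurj [t et] : i \in S by rewrite /S inE hi'.
    by exists t; rewrite // inE -et.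
  by move: ht; rewrite inE.
have hEim : E = g @: E'.
  apply/setP => i; apply/idP/imsetP => [hi'|[t ht ->]].
    have /gsurj [t et] : i \in S by rewrite /S inE hi' orbT.
    by exists t; rewrite // inE -et.
  by move: ht; rewrite inE.
have cC' : #|C'| = k.
  by rewrite -(card_imset C' ginj); move: hC; rewrite {1}hCim.
have cE' : #|E'| = k.
  by rewrite -(card_imset E' ginj); move: hE; rewrite {1}hEim.
have hCE' : forall t, t \in C' -> t \in E' -> False.
  move=> t; rewrite !inE => h1 h2.
  by have := disjointFr hdis h1; rewrite h2.
have hne : C' != E'.
  apply/negP => /eqP heq.
  have [t ht] : exists t, t \in C' by apply/card_gt0P; rewrite cC'.
  by apply: (hCE' t ht); rewrite -heq.
have kQ : ktuple_partition k [set C'; E'].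
  apply/ktupleP => //; split.
  - by move=> B /set2P [->|->].
  - move=> t; have := gS t; case/setUP => h.
      by exists C'; rewrite ?inE ?eqxx //.
    by exists E'; rewrite ?inE ?eqxx ?orbT //.
  - move=> B1 B2 t /set2P [->|->] /set2P [->|->] // h1 h2; exfalso.
      exact: (hCE' t).
    exact: (hCE' t).
have eC : Dc D y C' = Dc D x C :=
  etrans (Dc_img hD x C' ginj) (congr1 (Dc D x) (esym hCim)).
have eE : Dc D y E' = Dc D x E :=
  etrans (Dc_img hD x E' ginj) (congr1 (Dc D x) (esym hEim)).
have eL : Dc D y lo = Dc D x (g @: lo) := Dc_img hD x lo ginj.
have eU : Dc D y hi = Dc D x (g @: hi) := Dc_img hD x hi ginj.
have := hmin _ kQ.
rewrite consec2 // !pcost2 //.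
  by rewrite eC eE eL eU.
apply/negP => /eqP heq.
have t0 : (0 < k * 2)%N by lia.
have h0 : Ordinal t0 \in [set t : 'I_(k * 2) | (t %/ k == 0)%N] by rewrite inE /= div0n.
by move: h0; rewrite heq inE /= div0n.
Qed.

Lemma sig_U N (A B : {set 'I_N}) : [disjoint A & B] -> sig (A :|: B) = sig A + sig B.
Proof.
by move=> h; rewrite /sig -(bigU _ _ _ h); apply: eq_bigl => i; rewrite !inE.
Qed.

Lemma bigU2 (T : Type) (idx : T) (op : Monoid.com_law idx) (I : finType)
  (R0 : {set I}) (X Y : I) (F : I -> T) :
  X != Y -> X \notin R0 -> Y \notin R0 ->
  \big[op/idx]_(B in [set X; Y] :|: R0) F B = op (\big[op/idx]_(B in R0) F B) (op (F X) (F Y)).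
Proof.
move=> hXY hX hY.
rewrite -setUA big_setU1; last by rewrite !inE negb_or hXY hX.
rewrite big_setU1 //.
by rewrite Monoid.mulmA Monoid.mulmC.
Qed.

Lemma splitQ (I : finType) (Q : {set I}) (C E : I) : C \in Q -> E \in Q ->
  Q = [set C; E] :|: (Q :\: [set C; E]).
Proof.
move=> hC hE; apply/setP => B; rewrite !inE.
case hB: ((B == C) || (B == E)) => //=.
by case/orP: hB => /eqP ->.
Qed.

Lemma bigU2n (I : finType) (R0 : {set I}) (X Y : I) (F : I -> nat) :
  X != Y -> X \notin R0 -> Y \notin R0 ->
  (\sum_(B in [set X; Y] :|: R0) F B = \sum_(B in R0) F B + (F X + F Y))%N.
Proof. exact: bigU2. Qed.
Ltac cl := repeat match goal with H : _ |- _ => clear H end.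

Local Open Scope ring_scope.

Theorem theorem1p4 (R : realFieldType) (k : nat) (hk : (2 <= k)%N)
    (D : seq R -> R) (hD : D = @Asum R \/ D = @Ssum R)
    (h2k : forall x : 'I_(k * 2) -> R, sorted_fun x ->
             minimal_ktuple k D x (consec_blocks k 2)) :
  forall (n : nat), (1 <= n)%N ->
  forall x : 'I_(k * n) -> R, sorted_fun x ->
    minimal_ktuple k D x (consec_blocks k n).
Proof.
move=> n hn x hx.
have hk0 : (0 < k)%N by lia.
split; first by apply/ktupleP => //; apply: consec_good.
move=> Q0 hQ0.
pose Phi (Q : {set {set 'I_(k * n)}}) := (\sum_(B in Q) (sig B) ^ 2)%N.
pose P (Q : {set {set 'I_(k * n)}}) := ktb k Q && (pcost D x Q <= pcost D x Q0)%R.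
have PQ0 : P Q0 by rewrite /P lexx andbT; apply/ktbP.
case: (arg_maxnP Phi PQ0) => Qs /andP [/ktbP hQs hcost] hmax.
have [gsize gcov guniq] : kgood k Qs by apply/ktupleP.
pose Bset (m : nat) := [set i : 'I_(k * n) | (i %/ k == m)%N].
have inB : forall i : 'I_(k * n), i \in Bset (i %/ k)%N by move=> i; rewrite inE.
have claim : forall m, (m < n)%N -> Bset m \in Qs.
  move=> m0 hm0; apply/negPn/negP => hnot.
  have exm : exists m, (m < n)%N && (Bset m \notin Qs) by exists m0; rewrite hm0.
  case: (ex_minnP exm) => m /andP [hm hBm] hmin.
  have below : forall m', (m' < m)%N -> Bset m' \in Qs.
    move=> m' hm'; apply/negPn/negP => h.
    have := hmin m'; rewrite h andbT => /(_ (ltn_trans hm' hm)); move: hm'; cl; lia.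
  have hi0 : (k * m < k * n)%N by rewrite ltn_mul2l hk0.
  pose i0 := Ordinal hi0.
  have [C hC i0C] := gcov i0.
  have cBm : #|Bset m| = k by apply: card_blk.
  have [j jBm jC] : exists2 j, j \in Bset m & j \notin C.
    apply/subsetPn/negP => hsub.
    have : Bset m == C by rewrite eqEcard hsub (gsize _ hC) cBm leqnn.
    by move/eqP => heq; move: hBm; rewrite heq hC.
  have [E hE jE] := gcov j.
  have hCE : C != E by apply/negP => /eqP heq; move: jC; rewrite heq jE.
  have hdis : [disjoint C & E].
    rewrite -setI_eq0; apply/eqP/setP => i; rewrite inE in_set0.
    apply/negbTE/andP => [[h1 h2]].
    by move/negP: hCE; apply; apply/eqP; apply: (guniq _ _ i).
  have jm : (j %/ k)%N = m by move: jBm; rewrite inE => /eqP.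
  have i0m : (i0 %/ k)%N = m by rewrite /= mulKn.
  have lowX : forall X i, X \in Qs -> i \in X -> (X = C \/ X = E) -> (k * m <= i)%N.
    move=> X i hX iX hXCE; rewrite leqNgt; apply/negP => hlt.
    have hlt' : (i %/ k < m)%N by rewrite ltn_divLR // [(m * k)%N]mulnC.
    have hXB : X = Bset (i %/ k)%N := guniq _ _ i hX (below _ hlt') iX (inB i).
    case: hXCE => hX'.
      have : i0 \in Bset (i %/ k)%N by rewrite -hXB hX'.
      by rewrite inE i0m => /eqP h; move: hlt'; rewrite -h ltnn.
    have : j \in Bset (i %/ k)%N by rewrite -hXB hX'.
    by rewrite inE jm => /eqP h; move: hlt'; rewrite -h ltnn.
  have lowCE : forall i, i \in C :|: E -> (k * m <= i)%N.
    move=> i /setUP [h|h].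
      exact: (lowX C i hC h (or_introl erefl)).
    exact: (lowX E i hE h (or_intror erefl)).
  have [L [U [cL cU hLU hbel hDc]]] :=
    swap hk0 hD h2k hx (gsize _ hC) (gsize _ hE) hdis.
  have i0L : i0 \in L.
    have : i0 \in L :|: U by rewrite hLU inE i0C.
    case/setUP => // i0U; exfalso.
    have [a aL] : exists a, a \in L by apply/card_gt0P; rewrite cL.
    have := hbel a i0 aL i0U.
    have : a \in C :|: E by rewrite -hLU inE aL.
    by move/lowCE => /= h1 h2; move: h1 h2; cl; lia.
  have hLC : C != L.
    apply/negP => /eqP hCL.
    have jU : j \in U.
      have : j \in L :|: U by rewrite hLU inE jE orbT.
      by case/setUP => // jL; move: jC; rewrite hCL jL.
    have hsub : C \subset Bset m :\ j.
      apply/subsetP => a aC; apply/setD1P; split.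
        by apply/negP => /eqP haj; move: jC; rewrite -haj aC.
      have aL : a \in L by rewrite -hCL.
      have := hbel a j aL jU.
      move: jBm; rewrite !inE !divk_eq // => /andP [h1 h2] h3.
      have := lowCE a; rewrite inE aC => /(_ isT) h4.
      move: h1 h2 h3 h4; cl; lia.
    have := subset_leq_card hsub.
    have := cardsD1 j (Bset m); rewrite jBm cBm (gsize _ hC) /= add1n.
    by move=> e h; move: (leq_trans (eq_leq (esym e)) h); rewrite ltnn.
  have hLE : E != L.
    apply/negP => /eqP hEL.
    have : i0 \in E by rewrite hEL.
    by move=> h; move: (disjointFr hdis i0C); rewrite h.
  have hdLU : [disjoint L & U].
    rewrite -setI_eq0; apply/eqP/setP => i; rewrite inE in_set0.
    apply/negbTE/andP => [[h1 h2]].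
    by have := hbel i i h1 h2; rewrite ltnn.
  have sC : (sig L < sig C)%N.
    apply: (sig_low hbel); last by [].
      by rewrite hLU subsetUl.
    by rewrite cL gsize.
  have sE : (sig L < sig E)%N.
    apply: (sig_low hbel); last by [].
      by rewrite hLU subsetUr.
    by rewrite cL gsize.
  have sLU : (sig L + sig U = sig C + sig E)%N by rewrite -!sig_U // hLU.
  pose R0 := Qs :\: [set C; E].
  have hR0 : forall B i, B \in R0 -> i \in B -> i \notin C :|: E.
    move=> B i; rewrite !inE negb_or => /andP [/andP [hBC hBE] hB] iB.
    apply/orP => [[iC|iE]].
      by move/negP: hBC; apply; apply/eqP; apply: (guniq _ _ i).
    by move/negP: hBE; apply; apply/eqP; apply: (guniq _ _ i).
  have hLR0 : L \notin R0.
    apply/negP => h; have := hR0 _ _ h i0L; rewrite inE i0C.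
    by [].
  have hUR0 : U \notin R0.
    apply/negP => h.
    have [u uU] : exists u, u \in U by apply/card_gt0P; rewrite cU.
    have := hR0 _ _ h uU; rewrite -hLU inE uU orbT.
    by [].
  have hLU' : L != U.
    apply/negP => /eqP h; have := hbel i0 i0 i0L; rewrite -h => /(_ i0L).
    by rewrite ltnn.
  have eQs := splitQ hC hE.
  pose Q2 := [set L; U] :|: R0.
  have hCR0 : C \notin R0 by rewrite !inE eqxx.
  have hER0 : E \notin R0 by rewrite !inE eqxx orbT.
  have kQ2 : ktuple_partition k Q2.
    apply/ktupleP => //; split.
    - move=> B; rewrite /Q2 inE => /orP [/set2P [->|->] //|].
      by rewrite inE => /andP [_]; apply: gsize.
    - move=> i; have [B hB iB] := gcov i.
      case hBR: (B \in R0).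
        by exists B => //; rewrite inE hBR orbT.
      have : i \in L :|: U.
        have : (B == C) || (B == E) by move: hBR; rewrite /R0 !inE hB andbT => /negbFE.
        by rewrite hLU; case/orP => /eqP <-; rewrite inE iB ?orbT.
      case/setUP => h.
        by exists L => //; rewrite !inE eqxx.
      by exists U => //; rewrite !inE eqxx orbT.
    - have inLU : forall B i, B \in [set L; U] -> i \in B -> i \in C :|: E.
        by move=> B i /set2P [->|->] iB; rewrite -hLU inE iB ?orbT.
      move=> B1 B2 i /setUP h1 /setUP h2 i1 i2.
      case: h1 => h1; case: h2 => h2.
      + move: h1 h2 i1 i2 => /set2P [->|->] /set2P [->|->] // i1 i2.
          by have := hbel i i i1 i2; rewrite ltnn.
        by have := hbel i i i2 i1; rewrite ltnn.
      + by have := hR0 B2 i h2 i2; rewrite (inLU B1 i).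
      + by have := hR0 B1 i h1 i1; rewrite (inLU B2 i).
      + move: h1 h2; rewrite /R0 !inE => /andP [_ h1] /andP [_ h2].
        exact: (guniq _ _ i).
  have cost2 : (pcost D x Q2 <= pcost D x Qs)%R.
    rewrite /pcost eQs /Q2 !bigU2 //; try by rewrite !inE ?eqxx ?orbT.
    by rewrite lerD2l.
  have : P Q2.
    apply/andP; split; first by apply/ktbP.
    exact: le_trans cost2 hcost.
  move/hmax => /=.
  rewrite /Phi eQs /Q2 !bigU2n //; try by rewrite !inE ?eqxx ?orbT.
  rewrite -/R0.
  move: sC sE sLU; set a := sig L; set b := sig C; set c := sig E; set d := sig U.
  move=> sC sE sLU.
  have : (b ^ 2 + c ^ 2 < a ^ 2 + d ^ 2)%N by move: sC sE sLU; cl; nia.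
  move=> h1 h2; move: h1 h2; cl; lia.
have hsub : forall B, B \in consec_blocks k n -> B \in Qs.
  move=> B /imsetP [m _ ->]; exact: (claim _ (ltn_ord m)).
have heq : consec_blocks k n = Qs.
  apply/setP => B; apply/idP/idP; first exact: hsub.
  move=> hB.
  have [i iB] : exists i, i \in B by apply/card_gt0P; rewrite gsize.
  have hi : (i %/ k < n)%N by rewrite ltn_divLR // [(n * k)%N]mulnC.
  have -> : B = Bset (i %/ k)%N by apply: (guniq _ _ i) => //; apply: claim.
  by apply/imsetP; exists (Ordinal hi).
by rewrite heq.
Qed.
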